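(* Let $\Sigma$ be a non-empty finite or countably infinite alphabet and $\mu$ a probability map over $\Sigma$. If there exists a $\mu$-distributed sequence $\alpha\in\Sigma^\omega$, then $\mu$ is invariant, i.e. for every $w\in\Sigma^*$, $\sum_{a\in\Sigma}\mu(wa)=\mu(w)$ and $\sum_{a\in\Sigma}\mu(aw)=\mu(w)$.
   Context: A probability map over $\Sigma$ is $\mu:\Sigma^+\to[0,1]$ with $\sum_{w\in\Sigma^n}\mu(w)=1$ for every $n\ge1$, with the convention $\mu(\lambda)=1$ for the empty word $\lambda$. $\alpha$ is $\mu$-distributed if for every $w\in\Sigma^+$, $\lim_{N\to\infty}\#_w(\alpha|_{\le N})/N=\mu(w)$, where $\alpha|_{\le N}$ is the length-$N$ prefix and $\#_w(v)$ counts (possibly overlapping) occurrences of $w$ as a contiguous block in $v$. *)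

(* Defs.v *)
From HB Require Import structures.
From mathcomp Require Import all_boot all_order all_algebra.
From mathcomp Require Import all_classical all_reals all_analysis.
Set Implicit Arguments. Unset Strict Implicit. Unset Printing Implicit Defensive.
Import Order.TTheory GRing.Theory Num.Theory.
Local Open Scope classical_set_scope.
Local Open Scope ring_scope.
Import numFieldNormedType.Exports.

(* A probability map over Sigma: mu : Sigma^* -> [0,1] (its values on the
   non-empty words are the meaningful ones), with mu(lambda) = 1 by
   convention, and for every n >= 1 the (possibly infinite, non-negative)
   sum of mu over all words of length n is 1. *)
Definition prob_map (R : realType) (Sigma : countType)
  (mu : seq Sigma -> R) : Prop :=
  mu [::] = 1 /\
  (forall w : seq Sigma, 0 <= mu w <= 1) /\
  (forall n : nat, (1 <= n)%N ->
     (\esum_(w in [set w : seq Sigma | size w = n]) (mu w)%:E = 1%E)%E).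

Definition seq_prefix (Sigma : Type) (alpha : nat -> Sigma) (N : nat) : seq Sigma :=
  [seq alpha i | i <- iota 0 N].

Definition occ_count (Sigma : eqType) (w v : seq Sigma) : nat :=
  count (fun i => take (size w) (drop i v) == w) (iota 0 (size v - size w).+1).

Definition mu_distributed (R : realType) (Sigma : countType)
  (mu : seq Sigma -> R) (alpha : nat -> Sigma) : Prop :=
  forall w : seq Sigma, w != [::] ->
    ((occ_count w (seq_prefix alpha N))%:R / N%:R : R) @[N --> \oo] --> (mu w : R^o).

Definition mu_invariant (R : realType) (Sigma : countType)
  (mu : seq Sigma -> R) : Prop :=
  forall w : seq Sigma,
    (\esum_(a in [set: Sigma]) (mu (rcons w a))%:E = (mu w)%:E)%E /\
    (\esum_(a in [set: Sigma]) (mu (a :: w))%:E = (mu w)%:E)%E.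

(* Main.v *)
Require Import Defs.
From mathcomp Require Import all_boot all_order all_algebra.
From mathcomp Require Import all_classical all_reals all_analysis.
From mathcomp Require Import zify.
Set Implicit Arguments. Unset Strict Implicit. Unset Printing Implicit Defensive.
Section Comb.
Variables (S : eqType) (alpha : nat -> S).

Definition mat (w : seq S) i := [seq alpha k | k <- iota i (size w)] == w.
Definition gg (w : seq S) N i := (i + size w <= N) && mat w i.

Lemma occE w N : occ_count w (seq_prefix alpha N) = count (gg w N) (iota 0 N.+1).
Proof.
rewrite /occ_count /seq_prefix size_map size_iota.
have Hsz : size [seq alpha i | i <- iota 0 N] = N by rewrite size_map size_iota.
case: (leqP (size w) N) => hw.
  have -> : N.+1 = (N - size w).+1 + size w by rewrite addSn subnK.
  rewrite iotaD count_cat.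
  have -> : count (gg w N) (iota (0 + (N - size w).+1) (size w)) = 0.
    apply/eqP; rewrite -leqn0 leqNgt -has_count; apply/hasPn => i.
    rewrite mem_iota add0n /gg => /andP[h1 _]; apply/nandP; left.
    rewrite -ltnNge; lia.
  rewrite addn0; apply: eq_in_count => i; rewrite mem_iota add0n ltnS => /= hi.
  rewrite /gg /mat.
  have -> : i + size w <= N by lia.
  by rewrite /= -map_drop drop_iota -map_take take_iota add0n;
   congr (map _ (iota _ _) == _); apply/minn_idPl; lia.
have -> : N - size w = 0 by apply/eqP; rewrite subn_eq0 ltnW.
rewrite /= drop0 take_oversize ?size_map ?size_iota ?(ltnW hw) //.
have -> : ([seq alpha i | i <- iota 0 N] == w) = false.
  by apply/negbTE; apply/eqP => E; move: hw; rewrite -E size_map size_iota ltnn.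
rewrite /gg add0n leqNgt hw /=; apply/esym/eqP; rewrite -leqn0 leqNgt -has_count.
apply/hasPn => i _; rewrite /gg; apply/nandP; left; rewrite -ltnNge; lia.
Qed.

Lemma sum_eq_le (b : S) (c : bool) (s : seq S) : uniq s ->
  (\sum_(a <- s) (c && (b == a)) <= c)%N.
Proof.
move=> us; case: c; last by rewrite big1.
have -> : (\sum_(a <- s) (true && (b == a)) = count_mem b s)%N.
  by elim: s {us} => [|x s IH]; rewrite ?big_nil ?big_cons //= IH eq_sym.
by rewrite count_uniq_mem // leq_b1.
Qed.

Lemma rcons_le w N (s : seq S) l : uniq s ->
  (\sum_(a <- s) count (gg (rcons w a) N) l <= count (gg w N) l)%N.
Proof.
move=> us; elim: l => [|x l IH]; first by rewrite big1.
rewrite /= big_split /= addnC [X in (_ <= X)%N]addnC leq_add //.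
have E a : gg (rcons w a) N x =
   ((x + (size w).+1 <= N) && mat w x) && (alpha (x + size w) == a).
  by rewrite /gg /mat size_rcons -addn1 iotaD map_cat cats1 eqseq_rcons andbA.
under eq_bigr do rewrite E.
apply: leq_trans (sum_eq_le _ _ us) _.
rewrite /gg; case: (mat w x); rewrite ?andbF ?andbT //.
case h: (x + (size w).+1 <= N) => //=.
by have -> : x + size w <= N by lia.
Qed.

Lemma cons_le w N (s : seq S) : uniq s ->
  (\sum_(a <- s) count (gg (a :: w) N) (iota 0 N.+1) <= count (gg w N) (iota 0 N.+1))%N.
Proof.
move=> us.
have H l : (\sum_(a <- s) count (gg (a :: w) N) l <= count (gg w N) (map succn l))%N.
  elim: l => [|x l IH]; first by rewrite big1.
  rewrite /= big_split /= addnC [X in (_ <= X)%N]addnC leq_add //.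
  have E a : gg (a :: w) N x =
     ((x.+1 + size w <= N) && mat w x.+1) && (alpha x == a).
    by rewrite /gg /mat /= eqseq_cons addnS addSn [alpha x == a]eq_sym andbA andbAC.
  under eq_bigr do rewrite E.
  by apply: leq_trans (sum_eq_le _ _ us) _.
apply: leq_trans (H _) _.
have -> : map succn (iota 0 N.+1) = iota 1 N.+1.
  by rewrite (iotaDl 1 0); apply: eq_map => i; rewrite add1n.
have -> : (iota 1 N.+1 = iota 1 N ++ [:: N.+1]).
  by rewrite -(addn1 N) iotaD add1n addn1.
rewrite count_cat /= /gg (_ : (N.+1 + size w <= N) = false); last by lia.
by rewrite /= addn0 addnC leq_addl.
Qed.

End Comb.
Import Order.TTheory GRing.Theory Num.Theory.
Local Open Scope classical_set_scope.
Import numFieldNormedType.Exports.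
Local Open Scope ring_scope.
Lemma sum_cvg (R : realType) (I : Type) (u : I -> nat -> R) (m : I -> R) (s : seq I) :
  (forall a, u a n @[n --> \oo] --> (m a : R^o)) ->
  (\sum_(a <- s) u a n) @[n --> \oo] --> (\sum_(a <- s) m a : R^o).
Proof.
move=> cv; elim: s => [|x s IH].
  rewrite big_nil (_ : (fun n => _) = fun _ => 0); first exact: cvg_cst.
  by apply: boolp.funext => n; rewrite big_nil.
rewrite big_cons (_ : (fun n => _) = (fun n => u x n) + (fun n => \sum_(a <- s) u a n)).
  exact: cvgD.
by apply: boolp.funext => n; rewrite big_cons.
Qed.

Lemma rcons_nil0 (T : eqType) (w : seq T) a : rcons w a != [::].
Proof. by case: w. Qed.

Lemma le_step (R : realType) (Sigma : countType) (mu : seq Sigma -> R)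
  (alpha : nat -> Sigma) (w : seq Sigma) (s : seq Sigma) :
  mu_distributed mu alpha -> w != [::] -> uniq s ->
  \sum_(a <- s) mu (rcons w a) <= mu w /\ \sum_(a <- s) mu (a :: w) <= mu w.
Proof.
move=> hd wn us.
have cw := hd w wn.
pose u (v : seq Sigma) N : R := (occ_count v (seq_prefix alpha N))%:R / N%:R.
split.
- have cs := @sum_cvg R _ (fun a => u (rcons w a)) (fun a => mu (rcons w a)) s
    (fun a => hd (rcons w a) (rcons_nil0 w a)).
  apply: (ler_cvg_to cs cw); apply: nearW => N.
  rewrite -mulr_suml ler_wpM2r ?invr_ge0 ?ler0n // -natr_sum ler_nat.
  under eq_bigr do rewrite occE; rewrite occE; exact: rcons_le.
- have cs := @sum_cvg R _ (fun a => u (a :: w)) (fun a => mu (a :: w)) s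
    (fun a => hd (a :: w) isT).
  apply: (ler_cvg_to cs cw); apply: nearW => N.
  rewrite -mulr_suml ler_wpM2r ?invr_ge0 ?ler0n // -natr_sum ler_nat.
  under eq_bigr do rewrite occE; rewrite occE; exact: cons_le.
Qed.

Local Open Scope ereal_scope.

Lemma esum_eq_pt (R : realType) (T : choiceType) (I : set T) (f g : T -> \bar R) i :
  (forall j, I j -> 0 <= f j /\ f j <= g j) -> g i \is a fin_num ->
  \esum_(j in I) f j = \esum_(j in I) g j -> \esum_(j in I) g j \is a fin_num ->
  I i -> f i = g i.
Proof.
move=> hfg gfin E Efin Ii.
have f0 j : I j -> 0 <= f j by move=> /hfg[].
have g0 j : I j -> 0 <= g j by move=> Ij; have [a b] := hfg j Ij; exact: le_trans b.
have Es : I `&` [set i] = [set i] by apply: setIidr => j ->.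
move: E Efin; rewrite (esumID [set i] I f f0) (esumID [set i] I g g0) Es.
rewrite !esum_set1 ?f0 ?g0 //.
set Sf := esum _ f; set Sg := esum _ g => E Efin.
have Sfg : Sf <= Sg.
  by apply: le_esum => j [Ij _]; have [] := hfg j Ij.
have Sf0 : 0 <= Sf.
  by apply: esum_ge0 => j [Ij _]; exact: f0.
have Sgfin : Sg \is a fin_num by move: Efin; rewrite fin_numD => /andP[].
have Sffin : Sf \is a fin_num.
  rewrite ge0_fin_numE //; apply: (le_lt_trans Sfg).
  by rewrite -ge0_fin_numE //; exact: (le_trans Sf0 Sfg).
have [_ le] := hfg i Ii.
move: le; rewrite le_eqVlt => /orP[/eqP //|lt].
by have := lte_leD Sffin lt Sfg; rewrite E ltxx.
Qed.

Lemma esum_le_step (R : realType) (Sigma : countType) (mu : seq Sigma -> R)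
  (alpha : nat -> Sigma) (w : seq Sigma) :
  mu_distributed mu alpha -> w != [::] ->
  \esum_(a in [set: Sigma]) (mu (rcons w a))%:E <= (mu w)%:E /\
  \esum_(a in [set: Sigma]) (mu (a :: w))%:E <= (mu w)%:E.
Proof.
move=> hd wn; split; apply: ge_ereal_sup => _ [X [finX _] <-];
  rewrite fsbig_finite // sumEFin lee_fin.
- exact: (le_step hd wn (finmap.fset_uniq _)).1.
- exact: (le_step hd wn (finmap.fset_uniq _)).2.
Qed.

Theorem proposition2p2 (R : realType) (Sigma : countType) (x0 : Sigma)
  (mu : seq Sigma -> R) :
  prob_map mu ->
  (exists alpha : nat -> Sigma, mu_distributed mu alpha) ->
  mu_invariant mu.
Proof.
move=> [mu0 [mu01 tot]] [alpha hd].
have ge0 v : (0 <= mu v)%R by case/andP: (mu01 v).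
have E1 : \esum_(a in [set: Sigma]) (mu [:: a])%:E = 1.
  rewrite -(tot 1%N isT).
  rewrite (reindex_esum [set: Sigma] [set v | size v = 1%N] (fun a => [:: a])) //.
  split.
  - by move=> a _.
  - by move=> a b _ _ [].
  - by move=> v /=; case: v => [|a [|]] //= _; exists a.
have step n : (1 <= n)%N -> forall w : seq Sigma, size w = n ->
   \esum_(a in [set: Sigma]) (mu (rcons w a))%:E = (mu w)%:E /\
   \esum_(a in [set: Sigma]) (mu (a :: w))%:E = (mu w)%:E.
  move=> n1 w hw.
  have wn : w != [::] by apply/eqP => h; move: hw n1; rewrite h /= => <-.
  set I := [set w : seq Sigma | size w = n].
  have Gr : \esum_(v in [set v : seq Sigma | size v = n.+1]) (mu v)%:E =
      \esum_(w in I) \esum_(a in [set: Sigma]) (mu (rcons w a))%:E.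
    rewrite (esum_esum (I:=I) (J:=fun _ => setT) (a:= fun w a => (mu (rcons w a))%:E));
      last by move=> *; rewrite lee_fin.
    apply: (reindex_esum (I `*`` fun=> setT) _ (fun k => rcons k.1 k.2)).
    split.
    - by move=> [v a] [/= h _]; rewrite /= size_rcons h.
    - move=> [v a] [v' a'] _ _ /= /eqP; rewrite eqseq_rcons.
      by case/andP => /eqP -> /eqP ->.
    - move=> v /= hv; case/lastP: v hv => [|v a] //=.
      by rewrite size_rcons => -[h]; exists (v, a).
  have Gc : \esum_(v in [set v : seq Sigma | size v = n.+1]) (mu v)%:E =
      \esum_(w in I) \esum_(a in [set: Sigma]) (mu (a :: w))%:E.
    rewrite (esum_esum (I:=I) (J:=fun _ => setT) (a:= fun w a => (mu (a :: w))%:E));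
      last by move=> *; rewrite lee_fin.
    apply: (reindex_esum (I `*`` fun=> setT) _ (fun k => k.2 :: k.1)).
    split.
    - by move=> [v a] [/= h _]; rewrite /= h.
    - by move=> [v a] [v' a'] _ _ /= [-> ->].
    - move=> v /= hv; case: v hv => [|a v] //= [h].
      by exists (v, a).
  have tn : \esum_(w in I) (mu w)%:E = 1 by exact: tot.
  have tn1 : \esum_(v in [set v : seq Sigma | size v = n.+1]) (mu v)%:E = 1.
    by apply: tot.
  split.
  - apply: (@esum_eq_pt R _ I (fun w => \esum_(a in [set: Sigma]) (mu (rcons w a))%:E)
       (fun w => (mu w)%:E)) => //.
    + move=> j hj; split; first by apply: esum_ge0 => a _; rewrite lee_fin.
      have jn : j != [::] by apply/eqP => h; move: hj n1; rewrite /I /= h => <-.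
      exact: (esum_le_step hd jn).1.
    + by rewrite -Gr tn1 tn.
    + by rewrite tn.
  - apply: (@esum_eq_pt R _ I (fun w => \esum_(a in [set: Sigma]) (mu (a :: w))%:E)
       (fun w => (mu w)%:E)) => //.
    + move=> j hj; split; first by apply: esum_ge0 => a _; rewrite lee_fin.
      have jn : j != [::] by apply/eqP => h; move: hj n1; rewrite /I /= h => <-.
      exact: (esum_le_step hd jn).2.
    + by rewrite -Gc tn1 tn.
    + by rewrite tn.
move=> w; case: (size w =P 0%N) => [/size0nil -> | /eqP hw].
  by rewrite mu0 /=; split; exact: E1.
by apply: (step (size w)) => //; rewrite lt0n.
Qed.
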